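(* Let $E$ be an $m\times n$ realizable matrix of rank $k$, and let $A$ be a $(0,1)$ matrix such that $A+E$ is a $(0,1)$ matrix. Then the following are equivalent: (a) $A$ and $A+E$ are Gram mates and $(2A+E)E^T=0$; (b) $A+E$ is obtained from $A$ by changing the signs of some positive singular values. Furthermore, if (a) or (b) holds, then: (i) the number of positive singular values whose signs are changed is $\mathrm{rank}(E)$; (ii) the positive singular values of $A$ whose signs are changed are the same as the $k$ positive singular values of $-\frac12E$; (iii) the corresponding left (resp. right) singular vectors of $A$ can be obtained from the corresponding left (resp. right) singular vectors of $-\frac12E$, and in particular the corresponding left (resp. right) singular vectors of $A$ form a basis of $\mathrm{Col}(E)$ (resp. $\mathrm{Row}(E)$).
   Context: Two $(0,1)$ matrices $A,B$ are Gram mates if $AA^T=BB^T$, $A^TA=B^TB$ and $A\neq B$. A $(0,1,-1)$ matrix $E$ with $E\mathbf 1=0$ and $\mathbf 1^TE=0^T$ is realizable if there is a $(0,1)$ matrix $A$ with $A$, $A+E$ Gram mates. ''$B$ is obtained from $A$ by changing the signs of some (say $r\ge1$) positive singular values'' means: there are orthogonal $U,V$ and rectangular diagonal $\Sigma$ with nonnegative diagonal with $A=U\Sigma V^T$, and a diagonal $\pm1$ matrix $S$ with exactly $r$ entries $-1$, each at a position $i$ with $\Sigma_{ii}>0$, such that $B=US\Sigma V^T$; the singular values $\Sigma_{ii}$ at those positions are the ones whose signs are changed, and the corresponding columns of $U$ and $V$ are the corresponding left and right singular vectors. *)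

(* Defs.v *)
From HB Require Import structures.
From mathcomp Require Import all_boot all_order all_algebra.
From mathcomp Require Import reals.
Set Implicit Arguments. Unset Strict Implicit. Unset Printing Implicit Defensive.
Import Order.TTheory GRing.Theory Num.Theory.
Local Open Scope ring_scope.

Section Defs.
Variable R : realType.

Definition is01 m n (A : 'M[R]_(m, n)) : Prop :=
  forall i j, A i j = 0 \/ A i j = 1.

Definition gram_mates m n (A B : 'M[R]_(m, n)) : Prop :=
  [/\ is01 A, is01 B, A *m A^T = B *m B^T, A^T *m A = B^T *m B & A <> B].

Definition realizable m n (E : 'M[R]_(m, n)) : Prop :=
  [/\ (forall i j, E i j = 0 \/ E i j = 1 \/ E i j = -1),
      E *m (const_mx 1 : 'cV[R]_n) = 0,
      (const_mx 1 : 'rV[R]_m) *m E = 0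
    & exists A : 'M[R]_(m, n), gram_mates A (A + E)].

Definition orthogonal_mx n (U : 'M[R]_n) : Prop := U *m U^T = 1%:M.

Definition rect_diag_nonneg m n (S : 'M[R]_(m, n)) : Prop :=
  (forall (i : 'I_m) (j : 'I_n), (i : nat) <> j -> S i j = 0) /\
  (forall i j, 0 <= S i j).

Definition svd m n (A : 'M[R]_(m, n)) (U : 'M[R]_m) (S : 'M[R]_(m, n))
    (V : 'M[R]_n) : Prop :=
  [/\ orthogonal_mx U, orthogonal_mx V, rect_diag_nonneg S & A = U *m S *m V^T].

Definition sign_mx m (D : {set 'I_m}) : 'M[R]_m :=
  \matrix_(i, j) (if i == j then (if i \in D then -1 else 1) else 0).

(* B is obtained from A by changing the signs of the positive singular values
   at positions D (nonempty), w.r.t. the SVD A = U S V^T. *)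
Definition sign_change_witness m n (A B : 'M[R]_(m, n)) (U : 'M[R]_m)
    (S : 'M[R]_(m, n)) (V : 'M[R]_n) (D : {set 'I_m}) : Prop :=
  [/\ svd A U S V, D != set0,
      (forall i : 'I_m, i \in D -> exists j : 'I_n, (j : nat) = i /\ 0 < S i j)
    & B = U *m sign_mx D *m S *m V^T].

Definition obtained_by_sign_change m n (A B : 'M[R]_(m, n)) : Prop :=
  exists U S V D, @sign_change_witness m n A B U S V D.

Definition proj_l m (D : {set 'I_m}) : 'M[R]_m :=
  \matrix_(i, j) ((i == j) && (i \in D))%:R.
Definition proj_r m n (D : {set 'I_m}) : 'M[R]_n :=
  \matrix_(i, j) ((i == j) && [exists d in D, (d : nat) == i])%:R.

End Defs.

(* Main.v *)
Require Import Defs.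
From HB Require Import structures.
From mathcomp Require Import all_boot all_order all_algebra.
From mathcomp Require Import reals.
From mathcomp Require Import ring complex.
Import Order.TTheory GRing.Theory Num.Theory.
Local Open Scope ring_scope.
Set Implicit Arguments. Unset Strict Implicit. Unset Printing Implicit Defensive.
Section Eig.
Variable R : realType.

Lemma sym_eig n (M : 'M[R]_n) : M^T = M -> M != 0 ->
  exists (r : R) (v : 'rV[R]_n), [/\ r != 0, v != 0 & v *m M = r *: v].
Proof.
move=> Msym Mn0.
pose f := real_complex R.
pose Mc := map_mx f M.
have Mch : Mc \is hermsymmx.
  apply/is_hermitianmxP; rewrite expr0 scale1r.
  apply/matrixP => i j; rewrite !mxE -[in LHS]Msym !mxE.
  by apply/esym/CrealP; rewrite realE !lecE /= eqxx le_total.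
have /hermitian_normalmx /orthomx_spectralP Mdec := Mch.
have dreal := hermitian_spectral_diag_real Mch.
set P := spectralmx Mc in Mdec; set d := spectral_diag Mc in Mdec dreal.
have Pu : P \in unitmx by apply: spectral_unit.
have [j dj] : exists j, d 0 j != 0.
  apply/existsP; apply: contraNT Mn0; rewrite negb_exists => /forallP d0.
  have : Mc == 0.
    rewrite Mdec; apply/eqP.
    have -> : diag_mx d = 0.
      by apply/matrixP => a b; rewrite !mxE; have := d0 a; rewrite negbK => /eqP ->; rewrite mul0rn.
    by rewrite mulmx0 mul0mx.
  by rewrite map_mx_eq0.
have ev : eigenvalue Mc (d 0 j).
  apply/eigenvalueP; exists (row j P).
    rewrite -row_mul {1}Mdec !mulmxA mulmxV // mul1mx.
    by rewrite row_mul row_diag_mx -scalemxAl -rowE.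
  apply/eqP => /(congr1 (mulmx^~ (invmx P))); rewrite -row_mul mulmxV // mul0mx.
  move/rowP/(_ j); rewrite !mxE eqxx /= => /eqP; by rewrite oner_eq0.
have [r dr] : exists r, d 0 j = f r.
  have := mxOverP dreal 0 j.
  case: (d 0 j) => a b; rewrite realE !lecE /= => H.
  exists a; congr Complex; case/orP: H => /andP [/eqP -> _] //.
move: ev; rewrite eigenvalue_root_char dr /Mc -map_char_poly fmorph_root.
rewrite -eigenvalue_root_char => /eigenvalueP [v vM vn0].
exists r, v; split => //.
by apply: contraNneq dj; rewrite dr => ->; rewrite /f rmorph0.
Qed.
End Eig.
Section H.
Variable R : realType.

Lemma trmul_eq0 m n (N : 'M[R]_(m, n)) : N^T *m N = 0 -> N = 0.
Proof.
move=> H; apply/matrixP => i j; rewrite mxE.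
have := congr1 (fun M : 'M_n => M j j) H; rewrite !mxE.
under eq_bigr do rewrite mxE -expr2.
move/eqP; rewrite psumr_eq0 => [/allP/(_ i)|k _]; last exact: sqr_ge0.
by rewrite mem_index_enum => /(_ isT); rewrite sqrf_eq0 => /eqP.
Qed.

Lemma orthoC n (U : 'M[R]_n) : orthogonal_mx U -> U^T *m U = 1%:M.
Proof. by move/mulmx1C. Qed.

Lemma orthoT n (U : 'M[R]_n) : orthogonal_mx U -> orthogonal_mx U^T.
Proof. by move=> /orthoC; rewrite /orthogonal_mx trmxK. Qed.

Lemma ortho1 n : orthogonal_mx (1%:M : 'M[R]_n).
Proof. by rewrite /orthogonal_mx trmx1 mulmx1. Qed.

Lemma orthoM n (U V : 'M[R]_n) : orthogonal_mx U -> orthogonal_mx V ->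
  orthogonal_mx (U *m V).
Proof.
rewrite /orthogonal_mx => hU hV.
by rewrite trmx_mul mulmxA -(mulmxA U) hV mulmx1 hU.
Qed.

Lemma householder p (u : 'cV[R]_p.+1) : u^T *m u = 1%:M ->
  exists H : 'M[R]_p.+1, [/\ orthogonal_mx H, H^T = H & H *m delta_mx 0 0 = u].
Proof.
move=> uu.
pose e : 'cV[R]_p.+1 := delta_mx 0 0.
pose w := e - u.
pose c := (w^T *m w) 0 0.
have ee : e^T *m e = 1%:M.
  by rewrite /e trmx_delta mul_delta_mx; apply/matrixP => i j; rewrite !ord1 !mxE.
have ue : u^T *m e = (u 0 0)%:M.
  rewrite /e -colE [LHS]mx11_scalar; congr (_%:M); by rewrite !mxE.
have eu : e^T *m u = (u 0 0)%:M.
  by rewrite -[LHS]trmxK trmx_mul trmxK ue tr_scalar_mx.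
have wT : w^T *m w = (2 - 2 * u 0 0)%:M.
  rewrite /w [(e - u)^T]linearB /= mulmxBl !mulmxBr ee eu ue uu.
  by apply/matrixP => i j; rewrite !mxE; case: (i == j) => /=; rewrite ?mulr1n ?mulr0n; ring.
have cE : c = 2 - 2 * u 0 0 by rewrite /c wT mxE eqxx mulr1n.
have [c0|cn0] := eqVneq c 0.
  exists 1%:M; split; [exact: ortho1 | exact: trmx1 |].
  have w0 : w = 0 by apply: trmul_eq0; rewrite [LHS]mx11_scalar -/c c0; apply/matrixP=> i j; rewrite !mxE mul0rn.
  by rewrite mul1mx; apply/eqP; rewrite -subr_eq0 -/e -/w w0.
pose k := 2 / c.
pose W := w *m w^T.
exists (1%:M - k *: W).
have HT : (1%:M - k *: W)^T = 1%:M - k *: W.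
  by rewrite [(_ - _)^T]linearB /= [(k *: _)^T]linearZ /= trmx1 /W trmx_mul trmxK.
have WW : W *m W = c *: W.
  rewrite /W mulmxA -(mulmxA w) [w^T *m w]mx11_scalar -/c.
  by rewrite mul_mx_scalar scalemxAl.
split => //.
  rewrite /orthogonal_mx HT mulmxBl !mulmxBr mul1mx mulmx1 -!scalemxAl -!scalemxAr.
  rewrite mul1mx WW !scalerA.
  have -> : (k * k * c) *: W = (k + k) *: W.
    congr (_ *: _); rewrite /k; field; exact: cn0.
  by rewrite scalerDl opprB addrK subrK.
rewrite mulmxBl mul1mx -scalemxAl /W -mulmxA.
have -> : w^T *m delta_mx 0 0 = (w 0 0)%:M.
  rewrite -colE [LHS]mx11_scalar; congr (_%:M); by rewrite !mxE.
rewrite mul_mx_scalar scalerA.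
have -> : k * w 0 0 = 1.
  rewrite /k cE /w !mxE eqxx /=; rewrite cE in cn0; field.
  exact: cn0.
by rewrite scale1r /w opprB addrC subrK.
Qed.

End H.
Section B.
Variable R : realType.

Lemma blk_cases m n (P : 'I_(1 + m) -> 'I_(1 + n) -> Prop) :
  (forall (a : 'I_1) (b : 'I_1), P (lshift m a) (lshift n b)) ->
  (forall (a : 'I_1) (b : 'I_n), P (lshift m a) (rshift 1 b)) ->
  (forall (a : 'I_m) (b : 'I_1), P (rshift 1 a) (lshift n b)) ->
  (forall (a : 'I_m) (b : 'I_n), P (rshift 1 a) (rshift 1 b)) ->
  forall i j, P i j.
Proof.
move=> h1 h2 h3 h4 i j; rewrite -(splitK i) -(splitK j).
by case: (split i) => a; case: (split j) => b; [exact: h1|exact: h2|exact: h3|exact: h4].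
Qed.

Lemma rd_block m n (s : R) (S : 'M[R]_(m, n)) : 0 <= s -> rect_diag_nonneg S ->
  rect_diag_nonneg (block_mx (s%:M : 'M_1) 0 0 S : 'M_(1 + m, 1 + n)).
Proof.
move=> s0 [Sd Sn]; split.
  apply: blk_cases => a b.
  - by rewrite !ord1.
  - by rewrite block_mxEur mxE.
  - by rewrite block_mxEdl mxE.
  - by rewrite block_mxEdr /= => h; apply: Sd => e; apply: h; rewrite e.
apply: blk_cases => a b.
- by rewrite block_mxEul !ord1 mxE mulr1n.
- by rewrite block_mxEur mxE.
- by rewrite block_mxEdl mxE.
- by rewrite block_mxEdr.
Qed.

Lemma disj_block m n (s : R) (S1 S2 : 'M[R]_(m, n)) :
  (forall i j, S1 i j = 0 \/ S2 i j = 0) ->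
  forall i j, (block_mx (s%:M : 'M_1) 0 0 S1 : 'M_(1 + m, 1 + n)) i j = 0 \/
              (block_mx (0%:M : 'M_1) 0 0 S2 : 'M_(1 + m, 1 + n)) i j = 0.
Proof.
move=> h; apply: blk_cases => a b.
- by right; rewrite block_mxEul mxE mul0rn.
- by right; rewrite block_mxEur mxE.
- by right; rewrite block_mxEdl mxE.
- by rewrite !block_mxEdr.
Qed.

Lemma blockify a b (Z : 'M[R]_(1 + a, 1 + b)) (s : R) :
  Z *m delta_mx 0 0 = s *: (delta_mx 0 0 : 'cV_(1 + a)) ->
  Z^T *m delta_mx 0 0 = s *: (delta_mx 0 0 : 'cV_(1 + b)) ->
  Z = block_mx (s%:M : 'M_1) 0 0 (drsubmx Z).
Proof.
move=> hc hr.
have ec i : Z i 0 = s * (i == 0)%:R.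
  have := congr1 (fun M : 'cV_(1 + a) => M i 0) hc.
  by rewrite -colE !mxE eqxx andbT.
have er j : Z 0 j = s * (j == 0)%:R.
  have := congr1 (fun M : 'cV_(1 + b) => M j 0) hr.
  by rewrite -colE !mxE eqxx andbT.
rewrite -{1}[Z]submxK; congr block_mx; apply/matrixP => i j; rewrite !mxE.
- have -> : i == j by rewrite (ord1 i) (ord1 j).
  rewrite mulr1n (ord1 j) (ord1 i).
  have -> : lshift b (0 : 'I_1) = 0 by apply: val_inj.
  by rewrite ec; have -> : (lshift a (0 : 'I_1) == 0) by []; rewrite mulr1.
- have -> : lshift a i = 0 by apply: val_inj; rewrite ord1.
  by rewrite er; have -> : (rshift 1 j == 0) = false by []; rewrite mulr0.
- have -> : lshift b j = 0 by apply: val_inj; rewrite ord1.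
  by rewrite ec; have -> : (rshift 1 i == 0) = false by []; rewrite mulr0.
Qed.

End B.

Section Step.
Variable R : realType.

Definition simsvd m n (X Y : 'M[R]_(m, n)) : Prop :=
  exists (U : 'M[R]_m) (V : 'M[R]_n) (S1 S2 : 'M[R]_(m, n)),
  [/\ orthogonal_mx U, orthogonal_mx V, rect_diag_nonneg S1, rect_diag_nonneg S2 &
      [/\ (forall i j, S1 i j = 0 \/ S2 i j = 0),
      X = U *m S1 *m V^T & Y = U *m S2 *m V^T]].

Lemma nrm_ge0 n (x : 'cV[R]_n) : 0 <= (x^T *m x) 0 0.
Proof. rewrite mxE; apply: sumr_ge0 => i _; rewrite mxE -expr2; exact: sqr_ge0. Qed.

Lemma nrm_eq0 n (x : 'cV[R]_n) : (x^T *m x) 0 0 = 0 -> x = 0.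
Proof.
move=> h; apply: trmul_eq0; rewrite [LHS]mx11_scalar h.
by apply/matrixP => i j; rewrite !mxE mul0rn.
Qed.

Lemma drsub0 m1 m2 n1 n2 : drsubmx (0 : 'M[R]_(m1 + m2, n1 + n2)) = 0.
Proof. by apply/matrixP => i j; rewrite !mxE. Qed.

Lemma ortho_block n (U : 'M[R]_n) : orthogonal_mx U ->
  orthogonal_mx (block_mx (1%:M : 'M_1) 0 0 U).
Proof.
rewrite /orthogonal_mx => hU.
rewrite tr_block_mx mulmx_block !trmx0 !mulmx0 !mul0mx !addr0 !add0r trmx1 mulmx1 hU.
by rewrite -scalar_mx_block.
Qed.

Lemma trT m n (A B : 'M[R]_(m, n)) : A^T *m B = 0 -> B^T *m A = 0.
Proof. by move=> h; have := congr1 trmx h; rewrite trmx_mul trmxK trmx0. Qed.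

Lemma Ttr m n (A B : 'M[R]_(m, n)) : A *m B^T = 0 -> B *m A^T = 0.
Proof. by move=> h; have := congr1 trmx h; rewrite trmx_mul trmxK trmx0. Qed.

Lemma blk_mul3 m n (a : R) (U : 'M[R]_m) (S : 'M[R]_(m, n)) (V : 'M[R]_n) :
  block_mx (1%:M : 'M_1) 0 0 U *m block_mx (a%:M : 'M_1) 0 0 S *m
    (block_mx (1%:M : 'M_1) 0 0 V)^T = block_mx (a%:M : 'M_1) 0 0 (U *m S *m V^T).
Proof.
rewrite tr_block_mx !mulmx_block !trmx0 trmx1 !mulmx0 !mul0mx !addr0 !add0r.
by rewrite !mul0mx !mulmx1 mul1mx.
Qed.

Lemma step m n (X Y : 'M[R]_(m.+1, n.+1)) :
  X^T *m Y = 0 -> X *m Y^T = 0 -> X != 0 ->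
  (forall X' Y' : 'M[R]_(m, n), X'^T *m Y' = 0 -> X' *m Y'^T = 0 -> simsvd X' Y') ->
  simsvd X Y.
Proof.
move=> hTY hYT Xn0 IH.
have hYX : Y *m X^T = 0 by apply: Ttr.
have hYTX : Y^T *m X = 0 by apply: trT.
pose P := X^T *m X.
have PT : P^T = P by rewrite /P trmx_mul trmxK.
have Pn0 : P != 0 by apply: contra Xn0 => /eqP /trmul_eq0 ->.
have [r [w [rn0 wn0 wP]]] := sym_eig PT Pn0.
pose v0 := w^T.
have Pv0 : P *m v0 = r *: v0.
  by rewrite /v0 -[P in LHS]PT -trmx_mul wP linearZ.
pose c := (v0^T *m v0) 0 0.
have c0 : 0 < c.
  rewrite lt_def nrm_ge0 andbT; apply/eqP => /nrm_eq0 h.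
  by move: wn0; rewrite -[w]trmxK -/v0 h trmx0 eqxx.
pose q := Num.sqrt c.
have q0 : 0 < q by rewrite sqrtr_gt0.
have qq : q * q = c by rewrite -expr2 sqr_sqrtr // ltW.
pose v := q^-1 *: v0.
have vv : v^T *m v = 1%:M.
  rewrite /v [(_ *: v0)^T]linearZ /= -scalemxAl -scalemxAr scalerA [v0^T *m v0]mx11_scalar -/c.
  rewrite scale_scalar_mx; congr (_%:M); rewrite -qq; field.
  by rewrite gt_eqF.
have Pv : P *m v = r *: v by rewrite /v -scalemxAr Pv0 !scalerA mulrC.
have vPv : v^T *m P *m v = r%:M by rewrite -mulmxA Pv -scalemxAr vv scale_scalar_mx mulr1.
have XvXv : (X *m v)^T *m (X *m v) = r%:M by rewrite trmx_mul -mulmxA (mulmxA X^T) -vPv mulmxA.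
have r0 : 0 < r.
  rewrite lt_def rn0 /=; have := nrm_ge0 (X *m v).
  by rewrite XvXv mxE eqxx mulr1n.
pose s := Num.sqrt r.
have s0 : 0 < s by rewrite sqrtr_gt0.
have ss : s * s = r by rewrite -expr2 sqr_sqrtr // ltW.
pose u := s^-1 *: (X *m v).
have Xv : X *m v = s *: u by rewrite /u scalerA divff ?scale1r // gt_eqF.
have uu : u^T *m u = 1%:M.
  rewrite /u [(_ *: (X *m v))^T]linearZ /= -scalemxAl -scalemxAr scalerA XvXv scale_scalar_mx.
  congr (_%:M); rewrite -ss; field; by rewrite gt_eqF.
have XTu : X^T *m u = s *: v.
  rewrite /u -scalemxAr mulmxA -/P Pv scalerA -ss; congr (_ *: _); field.
  by rewrite gt_eqF.
have Yv : Y *m v = 0.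
  have : Y *m (P *m v) = 0 by rewrite /P !mulmxA hYX !mul0mx.
  rewrite Pv -scalemxAr => /eqP; rewrite scaler_eq0 (negbTE rn0) /= => /eqP //.
have YTu : Y^T *m u = 0 by rewrite /u -scalemxAr mulmxA hYTX mul0mx scaler0.
have [Hu [Huo HuT Hue]] := householder uu.
have [Hv [Hvo HvT Hve]] := householder vv.
have HuTHu := orthoC Huo.
have HvTHv := orthoC Hvo.
pose X0 := Hu^T *m X *m Hv.
pose Y0 := Hu^T *m Y *m Hv.
have X0c : X0 *m delta_mx 0 0 = s *: (delta_mx 0 0 : 'cV_(m.+1)).
  by rewrite /X0 -mulmxA Hve -mulmxA Xv -scalemxAr -Hue mulmxA HuTHu mul1mx.
have X0r : X0^T *m delta_mx 0 0 = s *: (delta_mx 0 0 : 'cV_(n.+1)).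
  rewrite /X0 !trmx_mul trmxK -!mulmxA Hue XTu -scalemxAr -Hve mulmxA HvTHv mul1mx.
  done.
have Y0c : Y0 *m delta_mx 0 0 = 0 *: (delta_mx 0 0 : 'cV_(m.+1)).
  by rewrite /Y0 -mulmxA Hve -mulmxA Yv mulmx0 scale0r.
have Y0r : Y0^T *m delta_mx 0 0 = 0 *: (delta_mx 0 0 : 'cV_(n.+1)).
  by rewrite /Y0 !trmx_mul trmxK -!mulmxA Hue YTu !mulmx0 scale0r.
have [X' X0E] : exists X', X0 = block_mx (s%:M : 'M_1) 0 0 X'.
  by eexists; apply: (blockify (a := m) (b := n) X0c X0r).
have [Y' Y0E] : exists Y', Y0 = block_mx (0%:M : 'M_1) 0 0 Y'.
  by eexists; apply: (blockify (a := m) (b := n) Y0c Y0r).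
have h1 : X'^T *m Y' = 0.
  have : X0^T *m Y0 = 0.
    rewrite /X0 /Y0 !trmx_mul trmxK !mulmxA -(mulmxA _ Hu) Huo mulmx1.
    by rewrite -(mulmxA _ X^T) hTY mulmx0 mul0mx.
  rewrite X0E Y0E (@tr_block_mx _ 1 m 1 n) (@mulmx_block _ 1 n 1 m 1 n).
  move=> /(congr1 (@drsubmx _ 1 n 1 n)).
  by rewrite block_mxKdr drsub0 !trmx0 !mul0mx add0r.
have h2 : X' *m Y'^T = 0.
  have : X0 *m Y0^T = 0.
    rewrite /X0 /Y0 !trmx_mul trmxK !mulmxA -(mulmxA _ Hv) Hvo mulmx1.
    by rewrite -(mulmxA _ X) hYT mulmx0 mul0mx.
  rewrite X0E Y0E (@tr_block_mx _ 1 m 1 n) (@mulmx_block _ 1 m 1 n 1 m).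
  move=> /(congr1 (@drsubmx _ 1 m 1 m)).
  by rewrite block_mxKdr drsub0 !trmx0 !mulmx0 add0r.
have [U' [V' [S1' [S2' [U'o V'o S1d S2d [dis XE' YE']]]]]] := IH X' Y' h1 h2.
have XE : X = Hu *m X0 *m Hv^T.
  by rewrite /X0 !mulmxA Huo mul1mx -mulmxA Hvo mulmx1.
have YE : Y = Hu *m Y0 *m Hv^T.
  by rewrite /Y0 !mulmxA Huo mul1mx -mulmxA Hvo mulmx1.
exists (Hu *m block_mx (1%:M : 'M_1) 0 0 U'), (Hv *m block_mx (1%:M : 'M_1) 0 0 V').
exists (block_mx (s%:M : 'M_1) 0 0 S1'), (block_mx (0%:M : 'M_1) 0 0 S2').
split.
- exact: orthoM Huo (ortho_block U'o).
- exact: orthoM Hvo (ortho_block V'o).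
- by apply: rd_block => //; exact: ltW.
- exact: rd_block.
split.
- exact: disj_block.
- by rewrite XE X0E XE' -(blk_mul3 (m := m) (n := n)) trmx_mul !mulmxA.
- by rewrite YE Y0E YE' -(blk_mul3 (m := m) (n := n)) trmx_mul !mulmxA.
Qed.

End Step.

Section All.
Variable R : realType.

Lemma simsvd0 m n : simsvd (0 : 'M[R]_(m, n)) 0.
Proof.
exists 1%:M, 1%:M, 0, 0; split; try exact: ortho1.
- by split => *; rewrite mxE.
- by split => *; rewrite mxE.
by split; [move=> *; left; rewrite mxE | rewrite mulmx0 mul0mx | rewrite mulmx0 mul0mx].
Qed.

Lemma simsvd_sym m n (X Y : 'M[R]_(m, n)) : simsvd X Y -> simsvd Y X.
Proof.
move=> [U [V [S1 [S2 [hU hV h1 h2 [hd hX hY]]]]]].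
exists U, V, S2, S1; split => //; split => // i j; by case: (hd i j); [right|left].
Qed.

Lemma simsvd_all m n (X Y : 'M[R]_(m, n)) :
  X^T *m Y = 0 -> X *m Y^T = 0 -> simsvd X Y.
Proof.
elim: m n X Y => [|m IH] n X Y hTY hYT.
  by rewrite (flatmx0 X) (flatmx0 Y); exact: simsvd0.
case: n X Y hTY hYT => [|n] X Y hTY hYT.
  by rewrite (thinmx0 X) (thinmx0 Y); exact: simsvd0.
have [X0|Xn0] := eqVneq X 0.
  have [Y0|Yn0] := eqVneq Y 0; first by rewrite X0 Y0; exact: simsvd0.
  apply: simsvd_sym; apply: step (trT hTY) (Ttr hYT) Yn0 _ => X' Y' h1 h2.
  exact: IH.
by apply: step hTY hYT Xn0 _ => X' Y' h1 h2; exact: IH.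
Qed.

Lemma sign_diag m (D : {set 'I_m}) :
  sign_mx R D = diag_mx (\row_i (if i \in D then -1 else 1)).
Proof. by apply/matrixP => i j; rewrite !mxE; case: eqP => [->|]; rewrite ?mxE ?mulr1n ?mulr0n. Qed.

Lemma projl_diag m (D : {set 'I_m}) :
  proj_l R D = diag_mx (\row_i (i \in D)%:R).
Proof. by apply/matrixP => i j; rewrite !mxE; case: eqP => [->|]; rewrite ?mxE ?mulr1n ?mulr0n. Qed.

Lemma projr_diag m n (D : {set 'I_m}) :
  proj_r R n D = diag_mx (\row_j ([exists d in D, (d : nat) == j])%:R).
Proof. by apply/matrixP => i j; rewrite !mxE; case: eqP => [->|]; rewrite ?mxE ?mulr1n ?mulr0n. Qed.

Lemma sign_sq m (D : {set 'I_m}) : sign_mx R D *m sign_mx R D = 1%:M.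
Proof.
rewrite sign_diag mulmx_diag; apply/matrixP => i j; rewrite !mxE.
by case: (i \in D); rewrite ?mulrNN mulr1.
Qed.

Lemma sign_tr m (D : {set 'I_m}) : (sign_mx R D)^T = sign_mx R D.
Proof. by rewrite sign_diag tr_diag_mx. Qed.

Lemma sign_ortho m (D : {set 'I_m}) : orthogonal_mx (sign_mx R D).
Proof. by rewrite /orthogonal_mx sign_tr sign_sq. Qed.

Lemma sign_sub1 m (D : {set 'I_m}) :
  sign_mx R D - 1%:M = - (2%:R *: proj_l R D).
Proof.
apply/matrixP => i j; rewrite !mxE; case: (i == j); rewrite ?mulr1n ?mulr0n /=.
  by case: (i \in D) => /=; rewrite ?mulr1 ?mulr0; [ring | rewrite subrr oppr0].
by rewrite subrr mulr0 oppr0.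
Qed.

Lemma diag_comm n (d : 'rV[R]_n) (M : 'M[R]_n) :
  (forall i j, i != j -> M i j = 0) -> diag_mx d *m M = M *m diag_mx d.
Proof.
move=> h; rewrite mul_diag_mx mul_mx_diag; apply/matrixP => i j; rewrite !mxE.
by have [<-|ne] := eqVneq i j; [rewrite mulrC | rewrite h // mulr0 mul0r].
Qed.

Lemma SST_diag m n (S : 'M[R]_(m, n)) : rect_diag_nonneg S ->
  forall i j, i != j -> (S *m S^T) i j = 0.
Proof.
move=> [hd _] i j ne; rewrite mxE big1 // => k _; rewrite mxE.
have [e|ne1] := eqVneq (i : nat) k; last by rewrite (hd i k) ?mul0r // => /eqP; rewrite (negbTE ne1).
have [e2|ne2] := eqVneq (j : nat) k; last by rewrite (hd j k) ?mulr0 // => /eqP; rewrite (negbTE ne2).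
have ij : i = j by apply/val_inj; rewrite /= e e2.
by rewrite ij eqxx in ne.
Qed.

End All.

Section BA.
Variable R : realType.

Lemma crossL m n (U : 'M[R]_m) (V : 'M[R]_n) (P Q : 'M[R]_(m, n)) :
  orthogonal_mx V ->
  (U *m P *m V^T) *m (U *m Q *m V^T)^T = U *m (P *m Q^T) *m U^T.
Proof.
move=> hV; rewrite !trmx_mul trmxK !mulmxA -(mulmxA (U *m P) V^T) (orthoC hV).
by rewrite mulmx1.
Qed.

Lemma crossR m n (U : 'M[R]_m) (V : 'M[R]_n) (P Q : 'M[R]_(m, n)) :
  orthogonal_mx U ->
  (U *m P *m V^T)^T *m (U *m Q *m V^T) = V *m (P^T *m Q) *m V^T.
Proof.
move=> hU; rewrite !trmx_mul trmxK !mulmxA -(mulmxA (V *m P^T) U^T) (orthoC hU).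
by rewrite mulmx1.
Qed.

Lemma b_to_a m n (A B : 'M[R]_(m, n)) U S V D :
  is01 A -> is01 B -> sign_change_witness A B U S V D ->
  gram_mates A B /\ (A + B) *m (B - A)^T = 0.
Proof.
move=> hA hB [[hU hV hS eA] Dn0 hD eB].
pose G := sign_mx R D.
have GK : G *m (S *m S^T) = (S *m S^T) *m G.
  by rewrite /G sign_diag; apply: diag_comm; exact: SST_diag.
have GG : G *m G = 1%:M by exact: sign_sq.
have GT : G^T = G by exact: sign_tr.
have eB' : B = U *m (G *m S) *m V^T by rewrite eB !mulmxA.
split; first split => //.
- rewrite eA eB' !crossL // trmx_mul GT; congr (_ *m _ *m _).
  by rewrite mulmxA -(mulmxA G S S^T) GK -mulmxA GG mulmx1.
- rewrite eA eB' !crossR // trmx_mul GT; congr (_ *m _ *m _).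
  by rewrite mulmxA -(mulmxA S^T G G) GG mulmx1.
- move=> AB; move: Dn0; case/set0Pn => i iD.
  have [j [ji Sij]] := hD i iD.
  have : S = G *m S.
    have := congr1 (fun M => U^T *m M *m V) AB.
    by rewrite eA eB' !mulmxA (orthoC hU) mul1mx -!mulmxA (orthoC hV) mulmx1 mul1mx.
  move/matrixP/(_ i j); rewrite /G sign_diag mul_diag_mx !mxE.
  case: ifP => [_|/negbT/negP nD]; last by case: (nD iD).
  rewrite mulN1r.
  move/eqP; rewrite -subr_eq0 opprK -mulr2n mulrn_eq0 /= => /eqP Sij0.
  by move: Sij; rewrite Sij0 ltxx.
have eAB : A + B = U *m ((1%:M + G) *m S) *m V^T by rewrite eA eB' mulmxDl mul1mx mulmxDr mulmxDl.
have eBA : B - A = U *m ((G - 1%:M) *m S) *m V^T.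
  by rewrite eA eB' mulmxBl mul1mx mulmxBr mulmxBl.
have GT1 : (G - 1%:M)^T = G - 1%:M by rewrite [(G - _)^T]linearB /= GT trmx1.
rewrite eAB eBA crossL //.
have -> : (1%:M + G) *m S *m ((G - 1%:M) *m S)^T = 0.
  have K1 : (S *m S^T) *m (G - 1%:M) = (G - 1%:M) *m (S *m S^T).
    by rewrite mulmxBr mulmxBl -GK mulmx1 mul1mx.
  rewrite trmx_mul GT1 mulmxA -(mulmxA (1%:M + G) S S^T) -mulmxA K1.
  rewrite mulmxA mulmxDl mul1mx mulmxBr GG mulmx1.
  by rewrite addrA subrK subrr mul0mx.
by rewrite mulmx0 mul0mx.
Qed.

End BA.

Section AB.
Variable R : realType.

Lemma a_to_b m n (A B : 'M[R]_(m, n)) :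
  gram_mates A B -> (A + B) *m (B - A)^T = 0 -> obtained_by_sign_change A B.
Proof.
move=> [hA hB _ hTT AnB] hAB.
pose M := (A + B)^T *m (B - A).
have ME : M = A^T *m B - B^T *m A.
  rewrite /M [(A + B)^T]linearD /= mulmxDl !mulmxBr hTT.
  by rewrite addrA subrK.
have MT : M^T = - M.
  by rewrite ME [(_ - _)^T]linearB /= !trmx_mul !trmxK opprB.
have MM : M *m M = 0.
  rewrite /M mulmxA -(mulmxA _ (B - A)) (Ttr hAB).
  by rewrite mulmx0 mul0mx.
have M0 : M = 0 by apply: trmul_eq0; rewrite MT mulNmx MM oppr0.
pose X := 2^-1 *: (A + B).
pose Y := 2^-1 *: (B - A).
have h1 : X^T *m Y = 0.
  by rewrite /X /Y [(_ *: (A + B))^T]linearZ /= -scalemxAl -scalemxAr -/M M0 !scaler0.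
have h2 : X *m Y^T = 0.
  by rewrite /X /Y [(_ *: (B - A))^T]linearZ /= -scalemxAl -scalemxAr hAB !scaler0.
have [U [V [S1 [S2 [hU hV hS1 hS2 [dis hX hY]]]]]] := simsvd_all h1 h2.
have eA : A = X - Y by apply/matrixP => i j; rewrite /X /Y !mxE; field.
have eB : B = X + Y by apply/matrixP => i j; rewrite /X /Y !mxE; field.
pose D := [set i : 'I_m | [exists j : 'I_n, (j == i :> nat) && (0 < S2 i j)]].
pose G := sign_mx R D.
have [hS1d hS1n] := hS1.
have [hS2d hS2n] := hS2.
have GS : G *m (S1 + S2) = S1 - S2.
  rewrite /G sign_diag mul_diag_mx; apply/matrixP => i j; rewrite !mxE.
  case: ifP => [|/negbT] iD.
    move: iD; rewrite inE => /existsP [j0 /andP [/eqP j0i S2p]].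
    have [e|ne] := eqVneq (j : nat) i.
      have jj0 : j = j0 by apply: val_inj; rewrite /= e j0i.
      rewrite jj0; case: (dis i j0) => [->|S20]; first by rewrite add0r sub0r mulN1r.
      by move: S2p; rewrite S20 ltxx.
    rewrite hS1d ?hS2d ?addr0 ?subr0 ?mulr0 //; apply/eqP; by rewrite eq_sym.
  have S20 : S2 i j = 0.
    have [e|ne] := eqVneq (j : nat) i; last by rewrite hS2d //; apply/eqP; rewrite eq_sym.
    apply/eqP; rewrite eq_le hS2n andbT leNgt; apply: contra iD => S2p.
    by rewrite inE; apply/existsP; exists j; rewrite S2p andbT e.
  by rewrite S20 addr0 subr0 mul1r.
have eB' : B = U *m (S1 + S2) *m V^T by rewrite eB hX hY -mulmxDl -mulmxDr.
have eA' : A = U *m G *m (S1 + S2) *m V^T.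
  by rewrite eA hX hY -mulmxBl -mulmxBr -GS !mulmxA.
exists (U *m G), (S1 + S2), V, D; split.
- split => //.
  + exact: orthoM hU (sign_ortho R D).
  + split => [i j ne|i j]; rewrite mxE; first by rewrite hS1d ?hS2d ?addr0.
    by rewrite addr_ge0.
- apply/negP => /eqP D0; apply: AnB.
  rewrite eA' eB'; congr (_ *m _ *m _).
  suff -> : G = 1%:M by rewrite mulmx1.
  by apply/matrixP => i j; rewrite !mxE D0 in_set0; case: (i == j).
- move=> i; rewrite inE => /existsP [j /andP [/eqP ji S2p]].
  exists j; split => //; rewrite mxE; apply: (lt_le_trans S2p).
  by rewrite lerDr hS1n.
- by rewrite eB' -(mulmxA U G G) sign_sq mulmx1.
Qed.

End AB.

Section W.
Variable R : realType.

Lemma rank_proj m (U : 'M[R]_m) (D : {set 'I_m}) : orthogonal_mx U ->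
  \rank (U *m proj_l R D) = #|D|.
Proof.
move=> hU.
pose Q : 'M[R]_(#|D|, m) := \matrix_(k, i) (enum_val k == i)%:R.
have QQ : Q *m Q^T = 1%:M.
  apply/matrixP => k k'; rewrite !mxE (bigD1 (enum_val k)) //= big1.
    rewrite !mxE eqxx mul1r addr0 (inj_eq enum_val_inj) eq_sym.
    by case: (k == k').
  by move=> i ni; rewrite !mxE eq_sym (negbTE ni) mul0r.
have QfQ : row_free Q by apply/row_freeP; exists Q^T.
have QTQ : Q^T *m Q = proj_l R D.
  apply/matrixP => i j; rewrite !mxE.
  have [iD|niD] := boolP (i \in D).
    rewrite andbT (bigD1 (enum_rank_in iD i)) //= big1.
      by rewrite !mxE enum_rankK_in // eqxx mul1r addr0.
    move=> k nk; rewrite !mxE; case: eqP => [ek|]; last by rewrite mul0r.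
    by case/eqP: nk; apply: enum_val_inj; rewrite enum_rankK_in // ek.
  rewrite andbF big1 // => k _; rewrite !mxE; case: eqP => [ek|]; last by rewrite mul0r.
  by move: (enum_valP k); rewrite ek (negbTE niD).
have UTf : row_free U^T by apply/row_freeP; exists U; exact: orthoC.
rewrite -QTQ mulmxA mxrankMfree // -mxrank_tr trmx_mul trmxK mxrankMfree //.
by move/eqP: QfQ.
Qed.

End W.

Section W2.
Variable R : realType.

Lemma w_props m n (A B : 'M[R]_(m, n)) U S V (D : {set 'I_m}) :
  sign_change_witness A B U S V D ->
  [/\ #|D| = \rank (B - A),
      - (2%:R^-1 *: (B - A)) = U *m (proj_l R D *m S) *m V^T,
      ((B - A)^T == (U *m proj_l R D)^T)%MS
    & ((B - A) == (V *m proj_r R n D)^T)%MS].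
Proof.
move=> [[hU hV [hSd hSn] eA] Dn0 hD eB].
set P := proj_l R D.
set Pr := proj_r R n D.
pose W := U *m (P *m S) *m V^T.
have eE : B - A = - (2%:R *: W).
  have -> : B - A = U *m ((sign_mx R D - 1%:M) *m S) *m V^T.
    by rewrite mulmxBl mul1mx mulmxBr mulmxBl eB eA !mulmxA.
  by rewrite sign_sub1 /W mulNmx mulmxN mulNmx -scalemxAl -scalemxAr -scalemxAl.
have eW : - (2%:R^-1 *: (B - A)) = W.
  by rewrite eE scalerN opprK scalerA mulVf ?scale1r // pnatr_eq0.
pose Sp : 'M[R]_(n, m) :=
  \matrix_(j, i) (if (j == i :> nat) && (i \in D) then (S i j)^-1 else 0).
have Pe i j : P i j = ((i == j) && (i \in D))%:R by rewrite /P mxE.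
have PSe i j : (P *m S) i j = (i \in D)%:R * S i j.
  by rewrite /P projl_diag mul_diag_mx !mxE.
have F1 : P *m S *m Sp = P.
  apply/matrixP => i k; rewrite Pe mxE.
  under eq_bigr do rewrite PSe.
  have [iD|niD] := boolP (i \in D); last first.
    by rewrite andbF big1 // => j _; rewrite !mxE !mul0r.
  have [j0 [j0i Sp0]] := hD i iD.
  rewrite andbT (bigD1 j0) //= big1 => [|j nj]; last first.
    rewrite !mxE hSd ?mulr0 ?mul0r // => e; case/eqP: nj; apply: val_inj.
    by rewrite /= -e j0i.
  rewrite !mxE mul1r addr0 j0i.
  have [ik|nik] := eqVneq (i : nat) k.
    have ik' : i = k by apply: val_inj.
    subst k; rewrite !eqxx /= mulr1n.
    case: ifP => [_|/negbT/negP []]; [by rewrite mulfV // gt_eqF | exact: iD].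
  rewrite /= mulr0.
  have -> : (i == k) = false by apply/negbTE; move: nik; apply: contra => /eqP ->.
  done.
have PSmx : P *m S = \matrix_(i, j) ((i \in D)%:R * S i j).
  by rewrite /P projl_diag mul_diag_mx; apply/matrixP => i j; rewrite !mxE.
have F4 : P *m S *m Pr = P *m S.
  rewrite PSmx /Pr projr_diag mul_mx_diag; apply/matrixP => i j; rewrite !mxE.
  case: (boolP [exists d in D, (d : nat) == j]) => [_|nex]; first by rewrite mulr1.
  rewrite mulr0; apply/esym.
  have [iD|niD] := boolP (i \in D); last by rewrite mul0r.
  rewrite hSd ?mulr0 // => e; move: nex; rewrite negb_exists_in => /forallP/(_ i).
  by rewrite iD e eqxx.
have F3 : Sp *m (P *m S) = Pr.
  apply/matrixP => j k; rewrite !mxE.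
  under eq_bigr do rewrite PSe.
  case: (boolP [exists d in D, (d : nat) == j]) => [/existsP [d /andP [dD /eqP dj]]|nex].
    rewrite andbT (bigD1 d) //= big1 => [|i ni]; last first.
      rewrite !mxE; case: ifP => [/andP [/eqP e iD]|]; last by rewrite mul0r.
      by case/eqP: ni; apply: val_inj; rewrite /= -e dj.
    have [j' [j'd Sp']] := hD d dD.
    have jj' : j = j' by apply: val_inj; rewrite /= j'd dj.
    subst j'.
    rewrite !mxE dj eqxx dD /= mul1r addr0.
    have [jk|njk] := eqVneq j k.
      by rewrite -jk mulVf // gt_eqF.
    rewrite (hSd d k) ?mulr0 // dj => e; case/eqP: njk; exact: val_inj.
  rewrite andbF big1 // => i _; rewrite !mxE; case: ifP => [/andP [/eqP e iD]|]; last by rewrite mul0r.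
  move: nex; rewrite negb_exists_in => /forallP/(_ i).
  by rewrite iD e eqxx.
have PrT : Pr^T = Pr by rewrite /Pr projr_diag tr_diag_mx.
have hUT := orthoC hU.
have hVT := orthoC hV.
have UPE : U *m P = (- (2%:R^-1 *: (B - A))) *m (V *m Sp).
  by rewrite eW /W -!mulmxA (mulmxA V^T V) hVT mul1mx (mulmxA P S Sp) F1.
have PrE : Pr *m V^T = (Sp *m U^T) *m (- (2%:R^-1 *: (B - A))).
  by rewrite eW /W !mulmxA -(mulmxA Sp) hUT mulmx1 -F3 mulmxA.
have EE1 : B - A = (- (2%:R *: (U *m (P *m S)))) *m V^T.
  by rewrite eE /W scalemxAl mulNmx.
have EE2 : B - A = (- (2%:R *: (U *m (P *m S)))) *m (V *m Pr)^T.
  have F4' : U *m (P *m S) *m Pr = U *m (P *m S) by rewrite -mulmxA F4.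
  rewrite EE1 trmx_mul PrT (mulmxA _ Pr V^T); congr (_ *m _).
  by rewrite mulNmx -scalemxAl F4'.
have s1 : ((B - A)^T <= (U *m P)^T)%MS.
  have WE : W = (U *m P) *m (S *m V^T) by rewrite /W !mulmxA.
  rewrite eE WE [(- _)^T]linearN /= [(_ *: _)^T]linearZ /= trmx_mul eqmx_opp.
  by apply: scalemx_sub; exact: submxMl.
have s2 : ((U *m P)^T <= (B - A)^T)%MS.
  rewrite UPE trmx_mul; apply: (submx_trans (submxMl _ _)).
  rewrite [(- _)^T]linearN /= [(_ *: (B - A))^T]linearZ /=.
  by rewrite eqmx_opp; apply: scalemx_sub; exact: submx_refl.
have s3 : ((B - A) <= (V *m Pr)^T)%MS by rewrite EE2; exact: submxMl.
have s4 : ((V *m Pr)^T <= (B - A))%MS.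
  rewrite trmx_mul PrT PrE; apply: (submx_trans (submxMl _ _)).
  by rewrite eqmx_opp; apply: scalemx_sub; exact: submx_refl.
have eq1 : ((B - A)^T == (U *m P)^T)%MS by rewrite /eqmx s1 s2.
split => //; last by rewrite /eqmx s3 s4.
by rewrite -mxrank_tr (eqmx_rank eq1) mxrank_tr rank_proj.
Qed.

End W2.

Unset Implicit Arguments.

Theorem proposition3p6 (R : realType) (m n k : nat) (E A : 'M[R]_(m, n)) :
  realizable E -> \rank E = k -> is01 A -> is01 (A + E) ->
  ((gram_mates A (A + E) /\ (2%:R *: A + E) *m E^T = 0)
     <-> obtained_by_sign_change A (A + E)) /\
  (forall (U : 'M[R]_m) (S : 'M[R]_(m, n)) (V : 'M[R]_n) (D : {set 'I_m}),
     sign_change_witness A (A + E) U S V D ->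
     [/\ #|D| = \rank E,
         - (2%:R^-1 *: E) = U *m (proj_l R D *m S) *m V^T,
         (E^T == (U *m proj_l R D)^T)%MS
       & (E == (V *m proj_r R n D)^T)%MS]).
Proof.
move=> _ _ hA hAE.
have BA : A + E - A = E by rewrite addrC addKr.
have AB : 2%:R *: A + E = A + (A + E) by rewrite scaler_nat mulr2n addrA.
split.
  split.
    move=> [hG hP]; apply: a_to_b hG _.
    by rewrite BA -AB.
  move=> [U [S [V [D W]]]].
  have [hG hP] := b_to_a hA hAE W.
  by split => //; rewrite AB -{2}BA.
move=> U S V D W.
by have := w_props W; rewrite BA.
Qed.
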